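(* Let $(A,\mu,\alpha_A,\varepsilon)$ be a commutative color Hom-associative algebra and $(\mathfrak g,[\cdot,\cdot]_{\mathfrak g},\alpha_{\mathfrak g},\varepsilon)$ a color Hom-Lie algebra (same $\Gamma$ and $\varepsilon$). (i) The $\Gamma$-graded space $\mathfrak g\otimes A$ with $\alpha(x\otimes a)=\alpha_{\mathfrak g}(x)\otimes\alpha_A(a)$ and $[x\otimes a,y\otimes b]=\varepsilon(a,y)[x,y]_{\mathfrak g}\otimes\mu(a,b)$ (homogeneous $x,y\in\mathfrak g$, $a,b\in A$) is a color Hom-Lie algebra. (ii) If $B_A$ is an associative scalar product on $A$ and $B_{\mathfrak g}$ is an invariant scalar product on $\mathfrak g$, then $(\mathfrak g\otimes A,[\cdot,\cdot],\alpha,\varepsilon,B)$ is a quadratic color Hom-Lie algebra, where $B(x\otimes a,y\otimes b)=\varepsilon(a,y)B_{\mathfrak g}(x,y)B_A(a,b)$.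
   Context: $\mathbb K$ is a field of characteristic zero and $\Gamma$ an abelian group. A bicharacter is a map $\varepsilon:\Gamma\times\Gamma\to\mathbb K\setminus\{0\}$ with $\varepsilon(a,b)\varepsilon(b,a)=1$, $\varepsilon(a,b+c)=\varepsilon(a,b)\varepsilon(a,c)$, $\varepsilon(a+b,c)=\varepsilon(a,c)\varepsilon(b,c)$; for homogeneous elements $\varepsilon(x,y)=\varepsilon(\deg x,\deg y)$. The tensor product is graded by $(V\otimes W)_\delta=\sum_{\gamma+\gamma'=\delta}V_\gamma\otimes W_{\gamma'}$. A color Hom-Lie algebra $(\mathfrak g,[\cdot,\cdot],\alpha,\varepsilon)$: $\Gamma$-graded space, even bilinear bracket, even linear $\alpha$, with $[x,y]=-\varepsilon(x,y)[y,x]$ and $\varepsilon(z,x)[\alpha(x),[y,z]]+\varepsilon(x,y)[\alpha(y),[z,x]]+\varepsilon(y,z)[\alpha(z),[x,y]]=0$. A color Hom-associative algebra $(A,\mu,\alpha_A,\varepsilon)$: $\Gamma$-graded space with even bilinear $\mu$ and even linear $\alpha_A$, $\mu(\alpha_A(a),\mu(b,c))=\mu(\mu(a,b),\alpha_A(c))$; commutative means $\mu(a,b)=\varepsilon(a,b)\mu(b,a)$. An associative scalar product on $A$ is a nondegenerate $\varepsilon$-symmetric ($B_A(a,b)=\varepsilon(a,b)B_A(b,a)$) bilinear form with $B_A(\mu(a,b),c)=B_A(a,\mu(b,c))$ and $B_A(\alpha_A(a),b)=B_A(a,\alpha_A(b))$. An invariant scalar product on $\mathfrak g$ is a nondegenerate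 $\varepsilon$-symmetric bilinear form with $B_{\mathfrak g}([x,y],z)=B_{\mathfrak g}(x,[y,z])$ and $B_{\mathfrak g}(\alpha_{\mathfrak g}(x),y)=B_{\mathfrak g}(x,\alpha_{\mathfrak g}(y))$. A quadratic color Hom-Lie algebra is one equipped with such a form. *)

(* Defs.v *)
From HB Require Import structures.
From mathcomp Require Import all_boot all_order all_algebra.
Set Implicit Arguments. Unset Strict Implicit. Unset Printing Implicit Defensive.
Import Order.TTheory GRing.Theory Num.Theory.
Local Open Scope ring_scope.

Section Defs.
Variables (K : fieldType) (Γ : zmodType).

Definition bicharacter (eps : Γ -> Γ -> K) : Prop :=
  (forall a b, eps a b != 0) /\
  (forall a b, eps a b * eps b a = 1) /\
  (forall a b c, eps a (b + c) = eps a b * eps a c) /\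
  (forall a b c, eps (a + b) c = eps a c * eps b c).

Definition is_subspace (V : lmodType K) (S : V -> Prop) : Prop :=
  S 0 /\ (forall x y, S x -> S y -> S (x + y)) /\
  (forall (c : K) x, S x -> S (c *: x)).

(* D g is the homogeneous component V_g; V is the direct sum of the V_g *)
Definition graded (V : lmodType K) (D : Γ -> V -> Prop) : Prop :=
  (forall g, is_subspace (D g)) /\
  (forall v : V, exists s : seq (Γ * V),
      (forall p, p \in s -> D p.1 p.2) /\ v = \sum_(p <- s) p.2) /\
  (forall s : seq (Γ * V), uniq (map fst s) ->
      (forall p, p \in s -> D p.1 p.2) -> \sum_(p <- s) p.2 = 0 ->
      forall p, p \in s -> p.2 = 0).

Definition lin_map (V W : lmodType K) (f : V -> W) : Prop :=
  forall (c : K) x y, f (c *: x + y) = c *: f x + f y.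

Definition bilin_map (U V W : lmodType K) (f : U -> V -> W) : Prop :=
  (forall (c : K) x1 x2 y, f (c *: x1 + x2) y = c *: f x1 y + f x2 y) /\
  (forall (c : K) x y1 y2, f x (c *: y1 + y2) = c *: f x y1 + f x y2).

Definition bilin_form (V : lmodType K) (B : V -> V -> K) : Prop :=
  (forall (c : K) x1 x2 y, B (c *: x1 + x2) y = c * B x1 y + B x2 y) /\
  (forall (c : K) x y1 y2, B x (c *: y1 + y2) = c * B x y1 + B x y2).

Definition even_bilin (V : lmodType K) (D : Γ -> V -> Prop) (f : V -> V -> V) :=
  forall a b x y, D a x -> D b y -> D (a + b) (f x y).

Definition even_lin (V : lmodType K) (D : Γ -> V -> Prop) (f : V -> V) :=
  forall a x, D a x -> D a (f x).

Definition color_hom_lie (V : lmodType K) (D : Γ -> V -> Prop)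
  (br : V -> V -> V) (al : V -> V) (eps : Γ -> Γ -> K) : Prop :=
  graded D /\ bilin_map br /\ lin_map al /\ even_bilin D br /\ even_lin D al /\
  (forall a b x y, D a x -> D b y -> br x y = - (eps a b *: br y x)) /\
  (forall a b c x y z, D a x -> D b y -> D c z ->
     eps c a *: br (al x) (br y z) + eps a b *: br (al y) (br z x)
       + eps b c *: br (al z) (br x y) = 0).

Definition comm_color_hom_assoc (V : lmodType K) (D : Γ -> V -> Prop)
  (mu : V -> V -> V) (al : V -> V) (eps : Γ -> Γ -> K) : Prop :=
  graded D /\ bilin_map mu /\ lin_map al /\ even_bilin D mu /\ even_lin D al /\
  (forall x y z, mu (al x) (mu y z) = mu (mu x y) (al z)) /\
  (forall a b x y, D a x -> D b y -> mu x y = eps a b *: mu y x).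

Definition nondegenerate (V : lmodType K) (B : V -> V -> K) : Prop :=
  forall x, (forall y, B x y = 0) -> x = 0.

Definition eps_symmetric (V : lmodType K) (D : Γ -> V -> Prop)
  (eps : Γ -> Γ -> K) (B : V -> V -> K) : Prop :=
  forall a b x y, D a x -> D b y -> B x y = eps a b * B y x.

Definition assoc_scalar_product (V : lmodType K) (D : Γ -> V -> Prop)
  (mu : V -> V -> V) (al : V -> V) (eps : Γ -> Γ -> K) (B : V -> V -> K) :=
  bilin_form B /\ nondegenerate B /\ eps_symmetric D eps B /\
  (forall x y z, B (mu x y) z = B x (mu y z)) /\
  (forall x y, B (al x) y = B x (al y)).

Definition invariant_scalar_product (V : lmodType K) (D : Γ -> V -> Prop)
  (br : V -> V -> V) (al : V -> V) (eps : Γ -> Γ -> K) (B : V -> V -> K) :=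
  bilin_form B /\ nondegenerate B /\ eps_symmetric D eps B /\
  (forall x y z, B (br x y) z = B x (br y z)) /\
  (forall x y, B (al x) y = B x (al y)).

Definition quadratic_color_hom_lie (V : lmodType K) (D : Γ -> V -> Prop)
  (br : V -> V -> V) (al : V -> V) (eps : Γ -> Γ -> K) (B : V -> V -> K) :=
  color_hom_lie D br al eps /\ invariant_scalar_product D br al eps B.

Definition tensor_product (V W T : lmodType K) (t : V -> W -> T) : Prop :=
  bilin_map t /\
  forall (U : lmodType K) (f : V -> W -> U), bilin_map f ->
    (exists h : T -> U, lin_map h /\ forall x y, h (t x y) = f x y) /\
    (forall h1 h2 : T -> U, lin_map h1 -> lin_map h2 ->
       (forall x y, h1 (t x y) = h2 (t x y)) -> forall z, h1 z = h2 z).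

(* (V (x) W)_d = sum_{g + g' = d} V_g (x) W_g' : finite sums of pure tensors
   x (x) y with x in V_g, y in W_(d - g) *)
Definition tensor_grading (V W T : lmodType K) (D1 : Γ -> V -> Prop)
  (D2 : Γ -> W -> Prop) (t : V -> W -> T) : Γ -> T -> Prop :=
  fun d z => exists s : seq ((Γ * V) * W),
    (forall p, p \in s -> D1 p.1.1 p.1.2 /\ D2 (d - p.1.1) p.2) /\
    z = \sum_(p <- s) t p.1.2 p.2.

End Defs.

(* Main.v *)
Require Import Defs.
From HB Require Import structures.
From mathcomp Require Import all_boot all_order all_algebra.
From mathcomp Require Import boolp ring.
Set Implicit Arguments. Unset Strict Implicit. Unset Printing Implicit Defensive.
Import Order.TTheory GRing.Theory Num.Theory.
Local Open Scope ring_scope.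


Section Lin.
Variable K : fieldType.
Section L.
Variables (V W : lmodType K) (f : V -> W) (Hf : lin_map f).
Lemma lin0 : f 0 = 0.
Proof. have := Hf 1 0 0; rewrite !scale1r addr0 => e.
by apply: (@addrI _ (f 0)); rewrite addr0 -e. Qed.
Lemma linD x y : f (x + y) = f x + f y. Proof. by have := Hf 1 x y; rewrite !scale1r. Qed.
Lemma linZ c x : f (c *: x) = c *: f x.
Proof. by have := Hf c x 0; rewrite !addr0 lin0 addr0. Qed.
Lemma linN x : f (- x) = - f x. Proof. by rewrite -scaleN1r linZ scaleN1r. Qed.
Lemma lin_sum (I : Type) (r : seq I) (P : pred I) (F : I -> V) :
  f (\sum_(i <- r | P i) F i) = \sum_(i <- r | P i) f (F i).
Proof. exact: (big_morph f linD lin0). Qed.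
End L.
Section BL.
Variables (U V W : lmodType K) (f : U -> V -> W) (Hf : bilin_map f).
Lemma bl1 y : lin_map (f^~ y). Proof. by move=> c x1 x2; case: Hf => H _; apply: H. Qed.
Lemma bl2 x : lin_map (f x). Proof. by move=> c y1 y2; case: Hf => _ H; apply: H. Qed.
Lemma bm10 y : f 0 y = 0. Proof. exact: (lin0 (bl1 y)). Qed.
Lemma bm20 x : f x 0 = 0. Proof. exact: (lin0 (bl2 x)). Qed.
Lemma bm1D x1 x2 y : f (x1 + x2) y = f x1 y + f x2 y. Proof. exact: (linD (bl1 y)). Qed.
Lemma bm2D x y1 y2 : f x (y1 + y2) = f x y1 + f x y2. Proof. exact: (linD (bl2 x)). Qed.
Lemma bm1Z c x y : f (c *: x) y = c *: f x y. Proof. exact: (linZ (bl1 y)). Qed.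
Lemma bm2Z c x y : f x (c *: y) = c *: f x y. Proof. exact: (linZ (bl2 x)). Qed.
Lemma bm1N x y : f (- x) y = - f x y. Proof. exact: (linN (bl1 y)). Qed.
Lemma bm2N x y : f x (- y) = - f x y. Proof. exact: (linN (bl2 x)). Qed.
Lemma bm1_sum (I : Type) (r : seq I) (P : pred I) (F : I -> U) y :
  f (\sum_(i <- r | P i) F i) y = \sum_(i <- r | P i) f (F i) y.
Proof. exact: (lin_sum (bl1 y)). Qed.
Lemma bm2_sum (I : Type) (r : seq I) (P : pred I) (F : I -> V) x :
  f x (\sum_(i <- r | P i) F i) = \sum_(i <- r | P i) f x (F i).
Proof. exact: (lin_sum (bl2 x)). Qed.
End BL.
Section BF.
Variables (V : lmodType K) (B : V -> V -> K) (HB : bilin_form B).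
Lemma bf10 y : B 0 y = 0.
Proof. have := HB.1 1 0 0 y; rewrite scale1r addr0 mul1r => e.
by apply: (@addrI _ (B 0 y)); rewrite addr0 -e. Qed.
Lemma bf20 x : B x 0 = 0.
Proof. have := HB.2 1 x 0 0; rewrite scale1r addr0 mul1r => e.
by apply: (@addrI _ (B x 0)); rewrite addr0 -e. Qed.
Lemma bf1D x1 x2 y : B (x1 + x2) y = B x1 y + B x2 y.
Proof. by have := HB.1 1 x1 x2 y; rewrite scale1r mul1r. Qed.
Lemma bf2D x y1 y2 : B x (y1 + y2) = B x y1 + B x y2.
Proof. by have := HB.2 1 x y1 y2; rewrite scale1r mul1r. Qed.
Lemma bf1Z c x y : B (c *: x) y = c * B x y.
Proof. by have := HB.1 c x 0 y; rewrite !addr0 bf10 addr0. Qed.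
Lemma bf2Z c x y : B x (c *: y) = c * B x y.
Proof. by have := HB.2 c x y 0; rewrite !addr0 bf20 addr0. Qed.
Lemma bf1_sum (I : Type) (r : seq I) (P : pred I) (F : I -> V) y :
  B (\sum_(i <- r | P i) F i) y = \sum_(i <- r | P i) B (F i) y.
Proof. exact: (big_morph (fun x => B x y) (fun a b => bf1D a b y) (bf10 y)). Qed.
Lemma bf2_sum (I : Type) (r : seq I) (P : pred I) (F : I -> V) x :
  B x (\sum_(i <- r | P i) F i) = \sum_(i <- r | P i) B x (F i).
Proof. exact: (big_morph (B x) (bf2D x) (bf20 x)). Qed.
Lemma bf1N x y : B (- x) y = - B x y.
Proof. by rewrite -scaleN1r bf1Z mulN1r. Qed.
End BF.
End Lin.

Lemma sum_supp (R : zmodType) (I : eqType) (P : pred I) (F : I -> R) (r1 r2 : seq I) :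
  uniq r1 -> uniq r2 -> (forall i, P i -> i \in r1) -> (forall i, P i -> i \in r2) ->
  (forall i, ~~ P i -> F i = 0) -> \sum_(i <- r1) F i = \sum_(i <- r2) F i.
Proof.
move=> u1 u2 s1 s2 F0.
have h r : \sum_(i <- r) F i = \sum_(i <- filter P r) F i.
  rewrite big_filter (bigID P) /=.
  by rewrite [X in _ + X]big1 ?addr0 // => i /F0.
rewrite (h r1) (h r2); apply: perm_big; apply: uniq_perm; rewrite ?filter_uniq //.
move=> i; rewrite !mem_filter; case Pi: (P i) => //=.
by rewrite (s1 _ Pi) (s2 _ Pi).
Qed.

Lemma sum_pred1_seq (R : zmodType) (I : eqType) (r : seq I) (i : I) (F : I -> R) :
  uniq r -> i \in r -> \sum_(j <- r | j == i) F j = F i.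
Proof.
move=> ur ir; rewrite (big_rem _ ir) eqxx big1_seq /=; first by rewrite addr0.
by move=> j /andP [/eqP -> ]; rewrite mem_rem_uniqF.
Qed.

Section Bi.
Variables (K : fieldType) (Γ : zmodType) (eps : Γ -> Γ -> K) (He : bicharacter eps).
Lemma e_neq0 a b : eps a b != 0. Proof. by case: He. Qed.
Lemma eDl a b c : eps (a + b) c = eps a c * eps b c. Proof. by case: He => _ [_ [_ H]]. Qed.
Lemma eDr a b c : eps a (b + c) = eps a b * eps a c. Proof. by case: He => _ [_ [H _]]. Qed.
Lemma eC a b : eps a b * eps b a = 1. Proof. by case: He => _ [H _]. Qed.
Lemma e0l c : eps 0 c = 1.
Proof. have := eDl 0 0 c; rewrite add0r => h.
by apply: (mulfI (e_neq0 0 c)); rewrite mulr1 -h. Qed.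
Lemma e0r c : eps c 0 = 1.
Proof. have := eDr c 0 0; rewrite add0r => h.
by apply: (mulfI (e_neq0 c 0)); rewrite mulr1 -h. Qed.
Lemma eNl a c : eps (- a) c = eps c a.
Proof. apply: (mulIf (e_neq0 a c)); by rewrite -eDl addNr e0l mulrC eC. Qed.
Lemma eNr a c : eps a (- c) = eps c a.
Proof. apply: (mulIf (e_neq0 a c)); by rewrite -eDr addNr e0r eC. Qed.
Lemma eBl a b c : eps (a - b) c = eps a c * eps c b. Proof. by rewrite eDl eNl. Qed.
Lemma eBr c a b : eps c (a - b) = eps c a * eps b c. Proof. by rewrite eDr eNr. Qed.
Lemma einv a b : eps b a = (eps a b)^-1.
Proof. apply: (mulfI (e_neq0 a b)); by rewrite eC mulfV // e_neq0. Qed.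
End Bi.

Section Grad.
Variables (K : fieldType) (Γ : zmodType) (V : lmodType K) (D : Γ -> V -> Prop) (HD : graded D).
Definition homog (s : seq (Γ * V)) := forall p, p \in s -> D p.1 p.2.
Definition sumg (s : seq (Γ * V)) (g : Γ) := \sum_(p <- s | p.1 == g) p.2.

Lemma D0 g : D g 0. Proof. by case: HD => H _; case: (H g). Qed.
Lemma DD g x y : D g x -> D g y -> D g (x + y). Proof. by case: HD => H _; case: (H g) => _ []; auto. Qed.
Lemma DZ g c x : D g x -> D g (c *: x). Proof. by case: HD => H _; case: (H g) => _ [] _; auto. Qed.
Lemma DN g x : D g x -> D g (- x). Proof. by move=> h; rewrite -scaleN1r; apply: DZ. Qed.
Lemma DB g x y : D g x -> D g y -> D g (x - y). Proof. by move=> h1 h2; apply: DD => //; apply: DN. Qed.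
Lemma Dsum g (I : Type) (r : seq I) (P : pred I) (F : I -> V) :
  (forall i, P i -> D g (F i)) -> D g (\sum_(i <- r | P i) F i).
Proof. move=> H; apply: (big_ind (D g)); [exact: D0|exact: DD|exact: H]. Qed.

Lemma sumgD s g : homog s -> D g (sumg s g).
Proof. by move=> H; rewrite /sumg big_seq_cond; apply: Dsum => p /andP [ps /eqP <-]; apply: H. Qed.

Lemma regroup s (L : seq Γ) : uniq L -> (forall p, p \in s -> p.1 \in L) ->
  \sum_(p <- s) p.2 = \sum_(g <- L) sumg s g.
Proof.
move=> uL sL; rewrite /sumg.
under [RHS]eq_bigr do rewrite big_mkcond.
rewrite exchange_big /=.
apply: eq_big_seq => p ps.
rewrite -big_mkcond /=.
rewrite (eq_bigl (fun g => g == p.1)); last by move=> g; rewrite eq_sym.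
by rewrite sum_pred1_seq // sL.
Qed.

Lemma sumg_nil s g : (forall p, p \in s -> p.1 != g) -> sumg s g = 0.
Proof. move=> H; rewrite /sumg big1_seq // => p /andP [/eqP e ps]; by move: (H p ps); rewrite e eqxx. Qed.

Lemma decomp_uniq s s' : homog s -> homog s' ->
  \sum_(p <- s) p.2 = \sum_(p <- s') p.2 -> forall g, sumg s g = sumg s' g.
Proof.
move=> hs hs' e g.
set L := undup (map fst (s ++ s')).
have uL : uniq L := undup_uniq _.
have inL p : p \in s ++ s' -> p.1 \in L by move=> pin; rewrite mem_undup; apply: map_f.
set u := [seq (h, sumg s h - sumg s' h) | h <- L].
have mu : map fst u = L by rewrite /u; elim: (L) => //= x l ->.
have hu : forall p, p \in u -> D p.1 p.2.
  by move=> p /mapP [h _ ->] /=; apply: DB; apply: sumgD.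
have su : \sum_(p <- u) p.2 = 0.
  rewrite big_map sumrB -(@regroup s L uL) -?(@regroup s' L uL) ?e ?subrr //.
  - by move=> p ps; apply: inL; rewrite mem_cat ps orbT.
  - by move=> p ps; apply: inL; rewrite mem_cat ps.
case: HD => _ [_ Hind].
case gL: (g \in L).
  have := Hind u; rewrite mu => /(_ uL hu su (g, sumg s g - sumg s' g)).
  by rewrite map_f //= => /(_ isT) /eqP; rewrite subr_eq0 => /eqP.
rewrite !sumg_nil //.
- move=> p ps; apply/eqP => pe; move: gL; rewrite -pe inL //.
  by rewrite mem_cat ps orbT.
- move=> p ps; apply/eqP => pe; move: gL; rewrite -pe inL //.
  by rewrite mem_cat ps.
Qed.

Lemma dec_ex v : exists s, homog s /\ v = \sum_(p <- s) p.2.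
Proof. by case: HD => _ [H _]; apply: H. Qed.
Definition dec v : seq (Γ * V) := proj1_sig (cid (dec_ex v)).
Lemma dec_homog v : homog (dec v). Proof. by rewrite /dec; case: cid => s []. Qed.
Lemma dec_sum v : v = \sum_(p <- dec v) p.2. Proof. by rewrite /dec; case: cid => s []. Qed.
Definition proj g v := sumg (dec v) g.
Lemma projD g v : D g (proj g v). Proof. by apply: sumgD; apply: dec_homog. Qed.
Lemma proj_eq s v g : homog s -> v = \sum_(p <- s) p.2 -> proj g v = sumg s g.
Proof. move=> hs e; apply: decomp_uniq => //; [exact: dec_homog | by rewrite -dec_sum]. Qed.
Lemma proj_lin g : lin_map (proj g).
Proof.
move=> c x y.
pose s := [seq (p.1, c *: p.2) | p <- dec x] ++ dec y.
have hs : homog s.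
  move=> p; rewrite mem_cat => /orP [/mapP [q qx ->] /= | py]; last by apply: (@dec_homog y).
  by apply: DZ; apply: (@dec_homog x).
rewrite (@proj_eq s) //.
  by rewrite /sumg big_cat big_map /= -scaler_sumr.
by rewrite big_cat big_map /= -scaler_sumr -!dec_sum.
Qed.
Lemma proj_hom g h v : D h v -> proj g v = if h == g then v else 0.
Proof.
move=> Dv; rewrite (@proj_eq [:: (h, v)]) ?big_seq1 //.
  by rewrite /sumg big_cons big_nil /=; case: eqP; rewrite ?addr0.
by move=> p; rewrite inE => /eqP ->.
Qed.
Lemma proj_supp g v : g \notin map fst (dec v) -> proj g v = 0.
Proof. move=> H; apply: sumg_nil => p ps; apply/eqP => e; move: H; by rewrite -e map_f. Qed.
Lemma proj_recomb v : v = \sum_(g <- undup (map fst (dec v))) proj g v.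
Proof. rewrite {1}(dec_sum v) (@regroup (dec v) (undup (map fst (dec v))) (undup_uniq _)) // => p ps. by rewrite mem_undup map_f. Qed.
End Grad.



Record subspace_of (K : fieldType) (V : lmodType K) := SubspaceOf {
  spred : V -> Prop; spredP : is_subspace spred }.

Section Sub.
Variables (K : fieldType) (V : lmodType K) (SS : subspace_of V).
Definition Sb (x : V) : bool := `[< spred SS x >].
Lemma Sb_closed : subsemimod_closed Sb.
Proof.
case: (spredP SS) => S0 [SD SZ]; split; first split.
- by apply/asboolP.
- by move=> x y /asboolP Sx /asboolP Sy; apply/asboolP; apply: SD.
- by move=> c x /asboolP Sx; apply/asboolP; apply: SZ.
Qed.
HB.instance Definition _ := GRing.isSubmodClosed.Build K V Sb Sb_closed.
Record subS := SubS { subval : V; _ : Sb subval }.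
HB.instance Definition _ := [isSub for subval].
HB.instance Definition _ := [Choice of subS by <:].
HB.instance Definition _ := [SubChoice_isSubLmodule of subS by <:].
Lemma subval_lin : lin_map subval. Proof. by []. Qed.
Lemma subvalP (x : subS) : spred SS (subval x). Proof. by case: x => v h; apply/asboolP. Qed.
Lemma subval_inj : injective subval. Proof. exact: val_inj. Qed.
End Sub.

Section Repro.
Variables (K : fieldType) (Γ : zmodType) (V : lmodType K) (D : Γ -> V -> Prop)
  (B : V -> V -> K) (HB : bilin_form B)
  (Hsep : forall x, (forall k y, D k y -> B x y = 0) -> x = 0).

Definition reprod (s : seq ((Γ * V) * V)) x := x = \sum_(p <- s) B x p.1.2 *: p.2.

Lemma repro_step (s : seq ((Γ * V) * V)) (k : Γ) (y e : V) (x : V) :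
  B e y != 0 ->
  \sum_(q <- [seq (p.1, p.2 - (B p.2 y / B e y) *: e) | p <- s] ++ [:: ((k, y), (B e y)^-1 *: e)])
     B x q.1.2 *: q.2 =
  \sum_(p <- s) B x p.1.2 *: p.2
   - (B (\sum_(p <- s) B x p.1.2 *: p.2) y / B e y) *: e + (B x y / B e y) *: e.
Proof.
move=> ne.
rewrite big_cat big_map big_seq1 /= (bf1_sum HB) /=.
under eq_bigr do rewrite scalerBr.
rewrite sumrB; congr (_ - _ + _); last by rewrite scalerA.
rewrite mulr_suml scaler_suml; apply: eq_bigr => p _.
by rewrite (bf1Z HB) scalerA mulrA.
Qed.

Lemma repro (xs : seq V) : exists s : seq ((Γ * V) * V),
  (forall p, p \in s -> D p.1.1 p.1.2) /\ forall x, x \in xs -> reprod s x.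
Proof.
elim: xs => [|x0 xs [s [Ds Hs]]]; first by exists [::].
set R := \sum_(p <- s) B x0 p.1.2 *: p.2.
case: (eqVneq (x0 - R) 0) => [e0|ene].
  exists s; split => // x; rewrite inE => /orP [/eqP -> | /Hs //].
  by move/eqP: e0; rewrite subr_eq0 => /eqP.
set e := x0 - R.
case: (pselect (exists k y, D k y /\ B e y != 0)) => [[k [y [Dy ney]]] | nE]; last first.
  exfalso; move/eqP: ene; apply; apply: Hsep => k y Dy.
  by apply/eqP/negPn/negP => ne; apply: nE; exists k, y.
exists ([seq (p.1, p.2 - (B p.2 y / B e y) *: e) | p <- s] ++ [:: ((k, y), (B e y)^-1 *: e)]).
split.
  move=> p; rewrite mem_cat => /orP [/mapP [q qs ->] /= | ]; first exact: Ds.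
  by rewrite inE => /eqP -> /=.
move=> x; rewrite /reprod repro_step // inE => /orP [/eqP -> | /Hs xr].
  rewrite -/R -/e.
  have -> : R = x0 - e by rewrite /e opprB addrC subrK.
  clearbody e.
  rewrite (bf1D HB) (bf1N HB) -/e.
  have -> : (B x0 y + - B e y) / B e y = B x0 y / B e y - 1 by field.
  by rewrite scalerBl scale1r opprB addrA subrK subrK.
by rewrite -xr subrK.
Qed.
End Repro.



Section Main.
Variables (K : fieldType) (Γ : zmodType) (eps : Γ -> Γ -> K)
  (A : lmodType K) (DA : Γ -> A -> Prop) (mu : A -> A -> A) (alA : A -> A)
  (g : lmodType K) (Dg : Γ -> g -> Prop) (brg : g -> g -> g) (alg : g -> g)
  (T : lmodType K) (t : g -> A -> T) (br : T -> T -> T) (al : T -> T).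
Hypotheses (He : bicharacter eps) (HA : comm_color_hom_assoc DA mu alA eps)
  (Hg : color_hom_lie Dg brg alg eps) (Ht : tensor_product t) (Hbr : bilin_map br)
  (Hbrt : forall (gx ga gy gb : Γ) x a y b, Dg gx x -> DA ga a -> Dg gy y -> DA gb b ->
     br (t x a) (t y b) = eps ga gy *: t (brg x y) (mu a b))
  (Hal : lin_map al) (Halt : forall x a, al (t x a) = t (alg x) (alA a)).

Let HAgr : graded DA. Proof. by case: HA. Qed.
Let Hmu : bilin_map mu. Proof. by case: HA => _ []. Qed.
Let HalA : lin_map alA. Proof. by case: HA => _ [_ []]. Qed.
Let HmuD : even_bilin DA mu. Proof. by case: HA => _ [_ [_ []]]. Qed.
Let HalAD : even_lin DA alA. Proof. by case: HA => _ [_ [_ [_ []]]]. Qed.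
Let HmuA x y z : mu (alA x) (mu y z) = mu (mu x y) (alA z).
Proof. by case: HA => _ [_ [_ [_ [_ []]]]]. Qed.
Let HmuC a b x y : DA a x -> DA b y -> mu x y = eps a b *: mu y x.
Proof. by case: HA => _ [_ [_ [_ [_ [_ H]]]]]; apply: H. Qed.
Let Hggr : graded Dg. Proof. by case: Hg. Qed.
Let Hbrg : bilin_map brg. Proof. by case: Hg => _ []. Qed.
Let Halg : lin_map alg. Proof. by case: Hg => _ [_ []]. Qed.
Let HbrgD : even_bilin Dg brg. Proof. by case: Hg => _ [_ [_ []]]. Qed.
Let HalgD : even_lin Dg alg. Proof. by case: Hg => _ [_ [_ [_ []]]]. Qed.
Let HbrgS a b x y : Dg a x -> Dg b y -> brg x y = - (eps a b *: brg y x).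
Proof. by case: Hg => _ [_ [_ [_ [_ [H _]]]]]; apply: H. Qed.
Let HbrgJ a b c x y z : Dg a x -> Dg b y -> Dg c z ->
  eps c a *: brg (alg x) (brg y z) + eps a b *: brg (alg y) (brg z x)
       + eps b c *: brg (alg z) (brg x y) = 0.
Proof. by case: Hg => _ [_ [_ [_ [_ [_ H]]]]]; apply: H. Qed.
Let Htb : bilin_map t. Proof. by case: Ht. Qed.

Notation TG := (tensor_grading Dg DA t).

Lemma TG0 d : TG d 0. Proof. by exists [::]; rewrite big_nil. Qed.
Lemma TGD d z w : TG d z -> TG d w -> TG d (z + w).
Proof.
move=> [s [Hs ->]] [s' [Hs' ->]]; exists (s ++ s'); rewrite big_cat; split => //.
by move=> p; rewrite mem_cat => /orP [/Hs | /Hs'].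
Qed.
Lemma TGZ d c z : TG d z -> TG d (c *: z).
Proof.
move=> [s [Hs ->]]; exists [seq ((p.1.1, c *: p.1.2), p.2) | p <- s]; split.
  move=> p /mapP [q qs ->] /=; case: (Hs q qs) => h1 h2; split => //.
  by apply: (DZ Hggr).
rewrite big_map scaler_sumr; apply: eq_bigr => p _ /=; by rewrite (bm1Z Htb).
Qed.
Lemma TG_pure d j x a : Dg j x -> DA (d - j) a -> TG d (t x a).
Proof. by move=> h1 h2; exists [:: ((j, x), a)]; rewrite big_seq1; split => // p; rewrite inE => /eqP ->. Qed.
Lemma TG_sum d (I : Type) (r : seq I) (P : pred I) (F : I -> T) :
  (forall i, P i -> TG d (F i)) -> TG d (\sum_(i <- r | P i) F i).
Proof. move=> H; apply: (big_ind (TG d)); [exact: TG0 | exact: TGD | exact: H]. Qed.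
Lemma TG_ind d (P : T -> Prop) : P 0 -> (forall u v, P u -> P v -> P (u + v)) ->
  (forall j x a, Dg j x -> DA (d - j) a -> P (t x a)) -> forall z, TG d z -> P z.
Proof.
move=> P0 PD Pt z [s [Hs ->]]; rewrite big_seq; apply: (big_ind P) => // p ps.
by case: (Hs p ps); apply: Pt.
Qed.

Definition pure (z : T) := exists L : seq ((Γ * g) * (Γ * A)),
  (forall q, q \in L -> Dg q.1.1 q.1.2 /\ DA q.2.1 q.2.2) /\ z = \sum_(q <- L) t q.1.2 q.2.2.

Lemma pure_sub : is_subspace pure.
Proof.
split; first by exists [::]; rewrite big_nil.
split.
  move=> z w [s [Hs ->]] [s' [Hs' ->]]; exists (s ++ s'); rewrite big_cat; split => //.
  by move=> p; rewrite mem_cat => /orP [/Hs | /Hs'].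
move=> c z [s [Hs ->]]; exists [seq ((p.1.1, c *: p.1.2), p.2) | p <- s]; split.
  move=> p /mapP [q qs ->] /=; case: (Hs q qs) => h1 h2; split => //.
  by apply: (DZ Hggr).
rewrite big_map scaler_sumr; apply: eq_bigr => p _ /=; by rewrite (bm1Z Htb).
Qed.

Lemma pure_t x a : pure (t x a).
Proof.
exists [seq (p, q) | p <- dec Hggr x, q <- dec HAgr a]; split.
  move=> q /allpairsP [[p1 p2] [h1 h2 ->]] /=; split.
    exact: (dec_homog h1).
  exact: (dec_homog h2).
rewrite big_allpairs {1}(dec_sum Hggr x) {1}(dec_sum HAgr a) (bm1_sum Htb).
apply: eq_bigr => p _; by rewrite (bm2_sum Htb).
Qed.

Lemma span z : pure z.
Proof.
pose SS := SubspaceOf pure_sub.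
pose f (x : g) (a : A) : subS SS := @SubS _ _ SS (t x a) (asboolT (pure_t x a)).
have fb : bilin_map f.
  split => *; apply: subval_inj => /=;
    by [rewrite (bm1D Htb) (bm1Z Htb) | rewrite (bm2D Htb) (bm2Z Htb)].
have [[h [hl hh]] _] := Ht.2 _ f fb.
have uniq := (Ht.2 T t Htb).2.
have <- : subval (h z) = z.
  apply: (uniq (fun z => subval (h z)) id) => //.
  - by move=> c x y; rewrite hl.
  - by move=> x y; rewrite hh.
exact: (subvalP (h z)).
Qed.

Lemma span_ind (P : T -> Prop) : P 0 -> (forall u v, P u -> P v -> P (u + v)) ->
  (forall j h x a, Dg j x -> DA h a -> P (t x a)) -> forall z, P z.
Proof.
move=> P0 PD Pt z; case: (span z) => L [HL ->]; rewrite big_seq.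
apply: (big_ind P) => // q qL; case: (HL q qL); apply: Pt.
Qed.

Let pg := proj Hggr.
Let pA := proj HAgr.
Definition Ig x := undup (map fst (dec Hggr x)).
Definition fP d x a := \sum_(j <- Ig x) t (pg j x) (pA (d - j) a).

Lemma pg_supp j x : pg j x != 0 -> j \in Ig x.
Proof. apply: contraR; rewrite mem_undup => H; apply/eqP; exact: proj_supp. Qed.

Lemma fP_any d x a J : uniq J -> (forall j, pg j x != 0 -> j \in J) ->
  fP d x a = \sum_(j <- J) t (pg j x) (pA (d - j) a).
Proof.
move=> uJ HJ; apply: (@sum_supp _ _ (fun j => pg j x != 0)) => //.
- exact: undup_uniq.
- by move=> i hi; apply: pg_supp.
- by move=> j /negPn /eqP ->; rewrite (bm10 Htb).
Qed.

Lemma fP_bil d : bilin_map (fP d).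
Proof.
split.
  move=> c x1 x2 y.
  set J := undup (Ig x1 ++ Ig x2 ++ Ig (c *: x1 + x2)).
  have uJ : uniq J := undup_uniq _.
  have HJ x : x \in [:: x1; x2; c *: x1 + x2] -> forall j, pg j x != 0 -> j \in J.
    rewrite !inE => Hx j /pg_supp jI; rewrite mem_undup !mem_cat.
    by case/or3P: Hx jI => /eqP -> ->; rewrite ?orbT.
  rewrite !(@fP_any d _ y J) //; try by apply: HJ; rewrite !inE eqxx ?orbT.
  rewrite scaler_sumr -big_split /=; apply: eq_bigr => j _.
  by rewrite /pg (linD (proj_lin _ _)) (linZ (proj_lin _ _)) (bm1D Htb) (bm1Z Htb).
move=> c x y1 y2; rewrite /fP scaler_sumr -big_split /=; apply: eq_bigr => j _.
by rewrite /pA (linD (proj_lin _ _)) (linZ (proj_lin _ _)) (bm2D Htb) (bm2Z Htb).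
Qed.

Lemma fP_hom d d' j x a : Dg j x -> DA (d' - j) a ->
  fP d x a = if d' == d then t x a else 0.
Proof.
move=> Dx Da; rewrite (@fP_any d x a [:: j]) //; last first.
  move=> i; rewrite /pg (proj_hom _ _ Dx) inE; by case: (eqVneq j i) => [_ | ne] //; rewrite eqxx.
rewrite big_seq1 /pg /pA (proj_hom _ _ Dx) (proj_hom _ _ Da) eqxx (inj_eq (addIr (- j))).
by case: eqP => _ //; rewrite (bm20 Htb).
Qed.

Lemma TG_graded : graded TG.
Proof.
split.
  move=> d; split; first exact: TG0.
  split; [exact: TGD | move=> c x; exact: TGZ].
split.
  move=> z; case: (span z) => L [HL ->].
  exists [seq (q.1.1 + q.2.1, t q.1.2 q.2.2) | q <- L]; split; last by rewrite big_map.
  move=> p /mapP [q qL ->] /=; case: (HL q qL) => h1 h2; apply: (TG_pure h1).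
  by rewrite addrC addKr.
move=> s us hs s0 p ps.
have [h [hl hh]] := (Ht.2 T (fP p.1) (fP_bil p.1)).1.
have hz d : forall z, TG d z -> h z = if d == p.1 then z else 0.
  apply: TG_ind.
  - by rewrite (lin0 hl); case: eqP.
  - by move=> u v hu hv; rewrite (linD hl) hu hv; case: eqP; rewrite ?addr0.
  - by move=> j x a Dx Da; rewrite hh (fP_hom _ Dx Da).
have := congr1 h s0; rewrite (lin0 hl) (lin_sum hl).
rewrite (eq_big_seq (fun q => if q.1 == p.1 then q.2 else 0)); last first.
  by move=> q qs /=; apply: hz; apply: hs.
rewrite -big_mkcond (big_rem _ ps) eqxx /= big1_seq; first by rewrite addr0.
move=> q /andP [/eqP qp qr].
have pu : uniq (map fst (p :: rem p s)).
  by rewrite -(perm_uniq (perm_map fst (perm_to_rem ps))).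
by move: pu => /= /andP [/negP []]; rewrite -qp; apply: map_f.
Qed.

Lemma TG_br a b z w : TG a z -> TG b w -> TG (a + b) (br z w).
Proof.
move=> Hz Hw; move: z Hz; apply: TG_ind.
- by rewrite (bm10 Hbr); apply: TG0.
- by move=> u v h1 h2; rewrite (bm1D Hbr); apply: TGD.
move=> j x y Dx Dy; move: w Hw; apply: TG_ind.
- by rewrite (bm20 Hbr); apply: TG0.
- by move=> u v h1 h2; rewrite (bm2D Hbr); apply: TGD.
move=> j' x' y' Dx' Dy'; rewrite (Hbrt Dx Dy Dx' Dy'); apply: TGZ.
apply: (TG_pure (HbrgD Dx Dx')).
have -> : a + b - (j + j') = (a - j) + (b - j') by rewrite opprD addrACA.
exact: HmuD.
Qed.

Lemma TG_al a z : TG a z -> TG a (al z).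
Proof.
move: z; apply: TG_ind.
- by rewrite (lin0 Hal); apply: TG0.
- by move=> u v h1 h2; rewrite (linD Hal); apply: TGD.
move=> j x y Dx Dy; rewrite Halt; apply: (TG_pure (HalgD Dx)); exact: HalAD.
Qed.

Ltac eps_norm := rewrite ?(eBl He) ?(eBr He) ?(eDl He) ?(eDr He) ?(eNl He) ?(eNr He).

Lemma TG_skew a b z w : TG a z -> TG b w -> br z w = - (eps a b *: br w z).
Proof.
move=> Hz Hw; move: z Hz; apply: TG_ind.
- by rewrite (bm10 Hbr) (bm20 Hbr) scaler0 oppr0.
- by move=> u v h1 h2; rewrite (bm1D Hbr) (bm2D Hbr) h1 h2 scalerDr opprD.
move=> j x y Dx Dy; move: w Hw; apply: TG_ind.
- by rewrite (bm20 Hbr) (bm10 Hbr) scaler0 oppr0.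
- by move=> u v h1 h2; rewrite (bm2D Hbr) (bm1D Hbr) h1 h2 scalerDr opprD.
move=> j' x' y' Dx' Dy'.
rewrite (Hbrt Dx Dy Dx' Dy') (Hbrt Dx' Dy' Dx Dy) (HbrgS Dx' Dx) (HmuC Dy' Dy).
rewrite (bm1N Htb) (bm1Z Htb) (bm2Z Htb) !scalerN opprK !scalerA.
congr (_ *: _).
eps_norm.
rewrite ?(einv He a b) ?(einv He a j) ?(einv He a j') ?(einv He b j) ?(einv He b j') ?(einv He j j').
by field; rewrite ?(e_neq0 He) ?oner_neq0.
Qed.

Lemma add6 (M : zmodType) (a1 a2 b1 b2 c1 c2 : M) :
  (a1 + a2) + (b1 + b2) + (c1 + c2) = (a1 + b1 + c1) + (a2 + b2 + c2).
Proof. by rewrite [(a1 + a2) + _]addrACA [(a1 + b1 + _) + _]addrACA. Qed.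

Lemma TG_jac a b c z w u : TG a z -> TG b w -> TG c u ->
  eps c a *: br (al z) (br w u) + eps a b *: br (al w) (br u z)
    + eps b c *: br (al u) (br z w) = 0.
Proof.
move=> Hz Hw Hu; move: z Hz; apply: TG_ind.
  by rewrite (lin0 Hal) !(bm10 Hbr) !(bm20 Hbr) !scaler0 !addr0.
  by move=> z1 z2 h1 h2; rewrite !(linD Hal) !(bm1D Hbr) !(bm2D Hbr) !scalerDr add6 h1 h2 addr0.
move=> j1 x1 y1 D1 E1; move: w Hw; apply: TG_ind.
  by rewrite (lin0 Hal) !(bm10 Hbr) !(bm20 Hbr) !scaler0 !addr0.
  by move=> z1 z2 h1 h2; rewrite !(linD Hal) !(bm1D Hbr) !(bm2D Hbr) !scalerDr add6 h1 h2 addr0.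
move=> j2 x2 y2 D2 E2; move: u Hu; apply: TG_ind.
  by rewrite (lin0 Hal) !(bm10 Hbr) !(bm20 Hbr) !scaler0 !addr0.
  by move=> z1 z2 h1 h2; rewrite !(linD Hal) !(bm1D Hbr) !(bm2D Hbr) !scalerDr add6 h1 h2 addr0.
move=> j3 x3 y3 D3 E3.
rewrite !Halt (Hbrt D2 E2 D3 E3) (Hbrt D3 E3 D1 E1) (Hbrt D1 E1 D2 E2) !(bm2Z Hbr).
rewrite (Hbrt (HalgD D1) (HalAD E1) (HbrgD D2 D3) (HmuD E2 E3)).
rewrite (Hbrt (HalgD D2) (HalAD E2) (HbrgD D3 D1) (HmuD E3 E1)).
rewrite (Hbrt (HalgD D3) (HalAD E3) (HbrgD D1 D2) (HmuD E1 E2)).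
set P := mu (mu y1 y2) (alA y3).
have e1 : mu (alA y1) (mu y2 y3) = P by rewrite HmuA.
have e2 : mu (alA y2) (mu y3 y1) = eps ((b - j2) + (c - j3)) (a - j1) *: P.
  by rewrite HmuA (HmuC (HmuD E2 E3) (HalAD E1)) HmuA.
have e3 : mu (alA y3) (mu y1 y2) = eps (c - j3) ((a - j1) + (b - j2)) *: P.
  by rewrite (HmuC (HalAD E3) (HmuD E1 E2)).
rewrite e1 e2 e3 !(bm2Z Htb) !scalerA.
have J := HbrgJ D1 D2 D3.
have J' := congr1 (t^~ P) J; rewrite /= !(bm1D Htb) !(bm1Z Htb) (bm10 Htb) in J'.
pose l := (eps c a * eps (b - j2) j3 * eps (a - j1) (j2 + j3)) / eps j3 j1.
rewrite -(scaler0 _ l) -J' !scalerDr !scalerA.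
congr (_ *: _ + _ *: _ + _ *: _); rewrite /l; eps_norm;
rewrite ?(einv He a b) ?(einv He a c) ?(einv He a j1) ?(einv He a j2) ?(einv He a j3)
  ?(einv He b c) ?(einv He b j1) ?(einv He b j2) ?(einv He b j3)
  ?(einv He c j1) ?(einv He c j2) ?(einv He c j3)
  ?(einv He j1 j2) ?(einv He j1 j3) ?(einv He j2 j3);
by field; rewrite ?(e_neq0 He) ?oner_neq0.
Qed.

Lemma part1 : color_hom_lie TG br al eps.
Proof.
split; first exact: TG_graded.
split; first exact: Hbr.
split; first exact: Hal.
split; first by move=> a b x y; apply: TG_br.
split; first by move=> a x; apply: TG_al.
split; first by move=> a b x y; apply: TG_skew.
by move=> a b c x y z; apply: TG_jac.
Qed.

Section Part2.
Variables (BA : A -> A -> K) (Bg : g -> g -> K) (B : T -> T -> K).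
Hypotheses (HBA : assoc_scalar_product DA mu alA eps BA)
  (HBg : invariant_scalar_product Dg brg alg eps Bg) (HB : bilin_form B)
  (HBt : forall (gx ga gy gb : Γ) x a y b, Dg gx x -> DA ga a -> Dg gy y -> DA gb b ->
        B (t x a) (t y b) = eps ga gy * Bg x y * BA a b).

Let HBAb : bilin_form BA. Proof. by case: HBA. Qed.
Let HBAn : Defs.nondegenerate BA. Proof. by case: HBA => _ []. Qed.
Let HBAs : eps_symmetric DA eps BA. Proof. by case: HBA => _ [_ []]. Qed.
Let HBAi x y z : BA (mu x y) z = BA x (mu y z). Proof. by case: HBA => _ [_ [_ []]]. Qed.
Let HBAa x y : BA (alA x) y = BA x (alA y). Proof. by case: HBA => _ [_ [_ [_ H]]]. Qed.
Let HBgb : bilin_form Bg. Proof. by case: HBg. Qed.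
Let HBgn : Defs.nondegenerate Bg. Proof. by case: HBg => _ []. Qed.
Let HBgs : eps_symmetric Dg eps Bg. Proof. by case: HBg => _ [_ []]. Qed.
Let HBgi x y z : Bg (brg x y) z = Bg x (brg y z). Proof. by case: HBg => _ [_ [_ []]]. Qed.
Let HBga x y : Bg (alg x) y = Bg x (alg y). Proof. by case: HBg => _ [_ [_ [_ H]]]. Qed.

Lemma Bt_any j h k x a y b : Dg j x -> DA h a -> Dg k y ->
  B (t x a) (t y b) = eps h k * Bg x y * BA a b.
Proof.
move=> Dx Da Dy.
rewrite {1}(dec_sum HAgr b) (bm2_sum Htb) (bf2_sum HB) [in RHS](dec_sum HAgr b).
rewrite (bf2_sum HBAb) mulr_sumr; apply: eq_big_seq => p ps.
exact: (HBt Dx Da Dy (dec_homog ps)).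
Qed.

Lemma B_sym : eps_symmetric TG eps B.
Proof.
move=> a b z w Hz Hw; move: z Hz; apply: TG_ind.
- by rewrite (bf10 HB) (bf20 HB) mulr0.
- by move=> u v h1 h2; rewrite (bf1D HB) (bf2D HB) h1 h2 mulrDr.
move=> j x y Dx Dy; move: w Hw; apply: TG_ind.
- by rewrite (bf10 HB) (bf20 HB) mulr0.
- by move=> u v h1 h2; rewrite (bf1D HB) (bf2D HB) h1 h2 mulrDr.
move=> j' x' y' Dx' Dy'.
rewrite (HBt Dx Dy Dx' Dy') (HBt Dx' Dy' Dx Dy) (HBgs Dx' Dx) (HBAs Dy' Dy).
eps_norm.
rewrite ?(einv He a b) ?(einv He a j) ?(einv He a j') ?(einv He b j) ?(einv He b j') ?(einv He j j').
by field; rewrite ?(e_neq0 He) ?oner_neq0.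
Qed.

Lemma B_inv z w u : B (br z w) u = B z (br w u).
Proof.
move: z; apply: span_ind.
  by rewrite (bm10 Hbr) (bf10 HB) (bf10 HB).
  by move=> z1 z2 h1 h2; rewrite (bm1D Hbr) !(bf1D HB) h1 h2.
move=> j1 h1 x1 y1 D1 E1; move: w; apply: span_ind.
  by rewrite (bm20 Hbr) (bm10 Hbr) (bf10 HB) (bf20 HB).
  by move=> z1 z2 e1 e2; rewrite (bm2D Hbr) (bm1D Hbr) (bf1D HB) (bf2D HB) e1 e2.
move=> j2 h2 x2 y2 D2 E2; move: u; apply: span_ind.
  by rewrite (bm20 Hbr) !(bf20 HB).
  by move=> z1 z2 e1 e2; rewrite (bm2D Hbr) !(bf2D HB) e1 e2.
move=> j3 h3 x3 y3 D3 E3.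
rewrite (Hbrt D1 E1 D2 E2) (Hbrt D2 E2 D3 E3) (bf1Z HB) (bf2Z HB).
rewrite (HBt (HbrgD D1 D2) (HmuD E1 E2) D3 E3) (HBt D1 E1 (HbrgD D2 D3) (HmuD E2 E3)).
rewrite HBgi HBAi; eps_norm.
rewrite ?(einv He h1 h2) ?(einv He h1 h3) ?(einv He h1 j1) ?(einv He h1 j2) ?(einv He h1 j3)
  ?(einv He h2 h3) ?(einv He h2 j1) ?(einv He h2 j2) ?(einv He h2 j3)
  ?(einv He h3 j1) ?(einv He h3 j2) ?(einv He h3 j3)
  ?(einv He j1 j2) ?(einv He j1 j3) ?(einv He j2 j3).
by field; rewrite ?(e_neq0 He) ?oner_neq0.
Qed.

Lemma B_al z w : B (al z) w = B z (al w).
Proof.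
move: z; apply: span_ind.
  by rewrite (lin0 Hal) !(bf10 HB).
  by move=> z1 z2 h1 h2; rewrite (linD Hal) !(bf1D HB) h1 h2.
move=> j1 h1 x1 y1 D1 E1; move: w; apply: span_ind.
  by rewrite (lin0 Hal) !(bf20 HB).
  by move=> z1 z2 e1 e2; rewrite (linD Hal) !(bf2D HB) e1 e2.
move=> j2 h2 x2 y2 D2 E2.
rewrite !Halt (HBt (HalgD D1) (HalAD E1) D2 E2) (HBt D1 E1 (HalgD D2) (HalAD E2)).
by rewrite HBga HBAa.
Qed.

Lemma B_nondeg : Defs.nondegenerate B.
Proof.
move=> z Hz.
case: (span z) => L [HL ze].
have Hsep : forall x, (forall k y, Dg k y -> Bg x y = 0) -> x = 0.
  move=> x H; apply: HBgn => y; rewrite (dec_sum Hggr y) (bf2_sum HBgb) big1_seq // => p /andP [_ ps].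
  exact: H (dec_homog ps).
have [s [Ds Hs]] := repro HBgb Hsep (map (fun q => q.1.2) L).
have ze' : z = \sum_(p <- s) t p.2 (\sum_(q <- L) Bg q.1.2 p.1.2 *: q.2.2).
  rewrite ze; symmetry.
  under eq_bigr do rewrite (bm2_sum Htb).
  rewrite exchange_big /=; apply: eq_big_seq => q qL.
  have e := Hs q.1.2 (map_f (fun q => q.1.2) qL); rewrite /reprod in e.
  rewrite [in RHS]e (bm1_sum Htb); apply: eq_bigr => p _.
  by rewrite (bm1Z Htb) (bm2Z Htb).
rewrite ze'; apply: big1_seq => p /andP [_ ps].
suff -> : \sum_(q <- L) Bg q.1.2 p.1.2 *: q.2.2 = 0 by rewrite (bm20 Htb).
have Dy := Ds p ps.
set k := p.1.1; set y := p.1.2.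
set S := \sum_(q <- L) Bg q.1.2 y *: q.2.2.
have W0 : \sum_(q <- L) (eps q.2.1 k * Bg q.1.2 y) *: q.2.2 = 0.
  apply: HBAn => b; rewrite (bf1_sum HBAb) -[RHS](Hz (t y b)) ze (bf1_sum HB).
  apply: eq_big_seq => q qL; case: (HL q qL) => Dx Da.
  by rewrite (bf1Z HBAb) (Bt_any _ Dx Da Dy).
have Pz h : pA h S = 0.
  have := congr1 (pA h) W0; rewrite /pA (lin0 (proj_lin _ _)) !(lin_sum (proj_lin _ _)).
  have -> : \sum_(q <- L) proj HAgr h ((eps q.2.1 k * Bg q.1.2 y) *: q.2.2)
           = eps h k *: \sum_(q <- L) proj HAgr h (Bg q.1.2 y *: q.2.2).
    rewrite scaler_sumr; apply: eq_big_seq => q qL; case: (HL q qL) => Dx Da.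
    rewrite !(linZ (proj_lin _ _)) (proj_hom _ _ Da).
    by case: eqP => [-> | _]; rewrite ?scaler0 // !scalerA.
  move/eqP; rewrite scaler_eq0 (negbTE (e_neq0 He _ _)) /= => /eqP.
  by rewrite -(lin_sum (proj_lin _ _)).
rewrite (proj_recomb HAgr S) big1 // => h _; exact: Pz.
Qed.

Lemma part2 : quadratic_color_hom_lie TG br al eps B.
Proof.
split; first exact: part1.
split; first exact: HB.
split; first exact: B_nondeg.
split; first exact: B_sym.
split; first by move=> x y z; apply: B_inv.
by move=> x y; apply: B_al.
Qed.
End Part2.
End Main.

Unset Implicit Arguments. Set Strict Implicit. Set Printing Implicit Defensive.

Theorem mainTheorem6 (K : fieldType) (Γ : zmodType) (eps : Γ -> Γ -> K)
  (A : lmodType K) (DA : Γ -> A -> Prop) (mu : A -> A -> A) (alA : A -> A)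
  (g : lmodType K) (Dg : Γ -> g -> Prop) (brg : g -> g -> g) (alg : g -> g)
  (T : lmodType K) (t : g -> A -> T)
  (br : T -> T -> T) (al : T -> T) :
  [pchar K] =i pred0 ->
  bicharacter eps ->
  comm_color_hom_assoc DA mu alA eps ->
  color_hom_lie Dg brg alg eps ->
  tensor_product t ->
  bilin_map br ->
  (forall (gx ga gy gb : Γ) x a y b, Dg gx x -> DA ga a -> Dg gy y -> DA gb b ->
     br (t x a) (t y b) = eps ga gy *: t (brg x y) (mu a b)) ->
  lin_map al ->
  (forall x a, al (t x a) = t (alg x) (alA a)) ->
  color_hom_lie (tensor_grading Dg DA t) br al eps /\
  (forall (BA : A -> A -> K) (Bg : g -> g -> K) (B : T -> T -> K),
     assoc_scalar_product DA mu alA eps BA ->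
     invariant_scalar_product Dg brg alg eps Bg ->
     bilin_form B ->
     (forall (gx ga gy gb : Γ) x a y b, Dg gx x -> DA ga a -> Dg gy y -> DA gb b ->
        B (t x a) (t y b) = eps ga gy * Bg x y * BA a b) ->
     quadratic_color_hom_lie (tensor_grading Dg DA t) br al eps B).
Proof.
move=> _ He HA Hg Ht Hbr Hbrt Hal Halt; split.
  exact: (part1 He HA Hg Ht Hbr Hbrt Hal Halt).
move=> BA Bg B HBA HBg HB HBt; exact: (part2 He HA Hg Ht Hbr Hbrt Hal Halt HBA HBg HB HBt).
Qed.
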